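(* Let $d\ge2$, let $\Omega=\{x\in\mathbb R^d:\ \ell_j(x)>b_j,\ j=1,\dots,m\}$ be a nonempty bounded open convex polytope, and suppose $\mathfrak E=\{e_1,\dots,e_p\}\subset\mathbb R^d$ is weakly incoming to $\Omega$. Let $x_0\in\overline\Omega$ and $k=\mathrm c(x_0)$. Then there exist $r>0$ and $I\subset\{1,\dots,m\}$ with $\#I=k$ such that $$\Omega\cap B(x_0,r)=B(x_0,r)\cap\Big(\bigcap_{i\in I}H_i^+\Big).$$ Further, there exist $\beta_1,\dots,\beta_k\in\{1,\dots,p\}$, $\theta_1,\dots,\theta_k\in\{\pm1\}$ and a bijection $\{1,\dots,k\}\ni n\mapsto i_n\in I$ such that for all $n\in\{1,\dots,k\}$: $\theta_ne_{\beta_n}$ is strictly incoming to $H_{i_n}$, and $\theta_ne_{\beta_n}$ is incoming to $H_{i_m}$ for all $m>n$.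
   Context: $\ell_j$ are linear forms on $\mathbb R^d$ and $b_j$ reals. $B(x_0,r)$ is the open ball. Define $\mathrm c:\mathbb R^d\to\mathbb N\cup\{+\infty\}$ by $\mathrm c(x)=0$ if $x\in\Omega$, $+\infty$ if $x\notin\overline\Omega$, $\#\{i:\ell_i(x)=b_i\}$ if $x\in\partial\Omega$. $\mathfrak E$ is weakly incoming to $\Omega$ if for every $x_0\in\partial\Omega$ there exist $\epsilon>0$, $\theta\in\{\pm1\}$, $e\in\mathfrak E$ with $\mathrm c(x_0+\theta te)<\mathrm c(x_0)$ for all $t\in]0,\epsilon]$. For each $k$, $H_k=\ker\ell_k$, $H_k^+=\{y:\ell_k(y)>b_k\}$, and $\nu_k$ is the unit vector orthogonal to $H_k$ with $\ell_k(\nu_k)>0$. A vector $u\ne0$ is incoming to $H_k$ if $\langle u,\nu_k\rangle\ge0$, and strictly incoming to $H_k$ if $\langle u,\nu_k\rangle>0$. *)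

(* Defs.v *)
(* Points of R^d are row vectors 'rV[R]_d;
   the topology on 'rV[R]_d is the product (= Euclidean) topology. *)
From HB Require Import structures.
From mathcomp Require Import all_boot all_order all_algebra.
From mathcomp Require Import all_classical all_reals all_analysis.
Set Implicit Arguments. Unset Strict Implicit. Unset Printing Implicit Defensive.
Import Order.TTheory GRing.Theory Num.Theory.
Import numFieldNormedType.Exports.
Local Open Scope classical_set_scope.
Local Open Scope ring_scope.

Section Defs.
Variables (R : realType) (d : nat).

Definition dotp (u v : 'rV[R]_d) : R := \sum_(i < d) u 0 i * v 0 i.
Definition enorm (u : 'rV[R]_d) : R := Num.sqrt (dotp u u).

(* the linear form ell_j(x) = <a_j, x>, given by its coefficient vector a_j *)
Definition lform (a : 'rV[R]_d) (x : 'rV[R]_d) : R := dotp a x.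

Definition eball (x0 : 'rV[R]_d) (r : R) : set 'rV[R]_d :=
  [set x | enorm (x - x0) < r].

Variable m : nat.
Variables (a : 'I_m -> 'rV[R]_d) (b : 'I_m -> R).

Definition Omega : set 'rV[R]_d := [set x | forall j, lform (a j) x > b j].

Definition Hplus (k : 'I_m) : set 'rV[R]_d := [set y | lform (a k) y > b k].

Definition nu (k : 'I_m) : 'rV[R]_d := (enorm (a k))^-1 *: a k.

Definition incoming (u : 'rV[R]_d) (k : 'I_m) : Prop := 0 <= dotp u (nu k).
Definition strictly_incoming (u : 'rV[R]_d) (k : 'I_m) : Prop := 0 < dotp u (nu k).

(* values in N ∪ {+oo}: Some n = n, None = +oo *)
Definition ltc (x y : option nat) : bool :=
  match x, y with
  | Some n1, Some n2 => (n1 < n2)%N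
  | Some _, None => true
  | None, _ => false
  end.

Definition cfun (x : 'rV[R]_d) : option nat :=
  if `[< Omega x >] then Some 0%N
  else if `[< closure Omega x >] then Some #|[set i : 'I_m | lform (a i) x == b i]|
  else None.

Definition weakly_incoming (p : nat) (e : 'I_p -> 'rV[R]_d) : Prop :=
  forall x0, (closure Omega `\` Omega) x0 ->
    exists eps : R, 0 < eps /\ exists theta : R, (theta = 1 \/ theta = -1) /\
      exists j : 'I_p, forall t : R, 0 < t -> t <= eps ->
        ltc (cfun (x0 + (theta * t) *: e j)) (cfun x0).

End Defs.

(* Main.v *)
Require Import Defs.
From HB Require Import structures.
From mathcomp Require Import all_boot all_order all_algebra.
From mathcomp Require Import all_classical all_reals all_analysis.
From mathcomp Require Import lra.
Import Order.TTheory GRing.Theory Num.Theory.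
Import numFieldNormedType.Exports.
Local Open Scope classical_set_scope.
Local Open Scope ring_scope.
Set Implicit Arguments. Unset Strict Implicit.
Section Helpers.
Variables (R : realType) (d : nat).
Implicit Types (u v w : 'rV[R]_d).

Lemma dotpC u v : dotp u v = dotp v u.
Proof. by apply: eq_bigr => i _; rewrite mulrC. Qed.

Lemma dotpDr u v w : dotp u (v + w) = dotp u v + dotp u w.
Proof. by rewrite /dotp -big_split; apply: eq_bigr => i _; rewrite mxE mulrDr. Qed.

Lemma dotpZr u v c : dotp u (c *: v) = c * dotp u v.
Proof. by rewrite /dotp mulr_sumr; apply: eq_bigr => i _; rewrite mxE mulrCA. Qed.

Lemma dotpNr u v : dotp u (- v) = - dotp u v.
Proof. by rewrite -scaleN1r dotpZr mulN1r. Qed.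

Lemma dotpBr u v w : dotp u (v - w) = dotp u v - dotp u w.
Proof. by rewrite dotpDr dotpNr. Qed.

Lemma dotp_sq_ge u i : u 0 i ^+ 2 <= dotp u u.
Proof.
rewrite /dotp (bigD1 i) //= expr2 lerDl; apply: sumr_ge0 => j _.
by rewrite -expr2 sqr_ge0.
Qed.

Lemma dotp_self_ge0 u : 0 <= dotp u u.
Proof. by apply: sumr_ge0 => j _; rewrite -expr2 sqr_ge0. Qed.

Lemma coord_le_enorm u i : `|u 0 i| <= enorm u.
Proof. by rewrite /enorm -sqrtr_sqr ler_sqrt ?dotp_sq_ge ?dotp_self_ge0. Qed.

Lemma enorm_gt0 u : u != 0 -> 0 < enorm u.
Proof.
move=> u0; rewrite /enorm sqrtr_gt0.
have [i ui] : exists i, u 0 i != 0.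
  apply/existsP; apply: contraNT u0; rewrite negb_exists => /forallP H.
  apply/eqP/matrixP => r c; rewrite (ord1 r) mxE; exact/eqP/negPn/H.
apply: lt_le_trans (dotp_sq_ge u i).
by rewrite lt_def sqr_ge0 andbT sqrf_eq0.
Qed.

Lemma dotp_bound u v M : (forall k, `|v 0 k| <= M) ->
  `|dotp u v| <= (\sum_k `|u 0 k|) * M.
Proof.
move=> H; apply: le_trans (ler_norm_sum _ _ _) _.
rewrite mulr_suml; apply: ler_sum => k _; rewrite normrM.
by apply: ler_wpM2l => //.
Qed.

Lemma bigmin_props (m : nat) (F : 'I_m -> R) : (forall i, 0 < F i) ->
  0 < \big[Order.min/1]_i F i /\ forall i, \big[Order.min/1]_i F i <= F i.
Proof.
move=> H; split; last by move=> i; exact: bigmin_le.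
by elim/big_ind: _ => // x y; rewrite lt_min => -> ->.
Qed.

End Helpers.
Lemma entry_le_mxnorm (R : realType) (d : nat) (v : 'rV[R]_d) k : `|v 0 k| <= `|v|.
Proof.
rewrite [leRHS]/Num.Def.normr /= mx_normrE; apply/bigmax_geP; right => /=.
by exists (0, k).
Qed.

Section Poly.
Variables (R : realType) (d m : nat) (a : 'I_m -> 'rV[R]_d) (b : 'I_m -> R).

Definition Aset (x : 'rV[R]_d) : {set 'I_m} := [set i | lform (a i) x == b i].

Lemma closure_ge x : closure (Omega a b) x -> forall j, b j <= lform (a j) x.
Proof.
move=> cx j; apply/ler_addgt0Pr => eps e0.
set S := \sum_k `|a j 0 k|.
have S0 : 0 <= S by apply: sumr_ge0.
have S1 : 0 < S + 1 by lra.
have dpos : 0 < eps / (S + 1) by apply: divr_gt0.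
have [y [Oy bxy]] := cx _ (nbhsx_ballx x _ dpos).
move: bxy; rewrite mx_norm_ball /ball_ /= => bxy.
have hb := dotp_bound (a j) (fun k => le_trans (entry_le_mxnorm (x - y) k) (ltW bxy)).
rewrite -/S in hb.
have h1 : S * (eps / (S + 1)) <= eps.
  rewrite mulrA ler_pdivrMr //; nra.
move: hb; rewrite ler_norml dotpBr => /andP[h2 h3].
have := Oy j; rewrite /lform.
lra.
Qed.

Lemma Omega_A0 x : Omega a b x -> Aset x = finset.set0.
Proof.
move=> Ox; apply/setP => i; rewrite !inE; apply/negbTE.
by rewrite neq_lt Ox orbT.
Qed.

Lemma cfun_cl x : closure (Omega a b) x -> cfun a b x = Some #|Aset x|.
Proof.
move=> cx; rewrite /cfun; case: (@asboolP (Omega a b x)) => [Ox|nO].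
  by rewrite Omega_A0 // cards0.
case: (@asboolP (closure (Omega a b) x)) => // _.
congr Some; apply: eq_card => i; rewrite !inE /=.
by apply/idP/idP; rewrite in_setE.
Qed.

Lemma local_eq x0 : closure (Omega a b) x0 -> exists r : R, 0 < r /\
  Omega a b `&` eball x0 r =
  eball x0 r `&` (\bigcap_(i in [set i | i \in Aset x0]) Hplus a b i).
Proof.
move=> cx.
pose S i := \sum_k `|a i 0 k|.
pose F i := if i \in Aset x0 then 1 else (lform (a i) x0 - b i) / (S i + 1).
have S0 i : 0 <= S i by apply: sumr_ge0.
have Fpos i : 0 < F i.
  rewrite /F; case: ifP => // /negbT; rewrite inE => ne.
  apply: divr_gt0; last by have := S0 i; lra.
  by rewrite subr_gt0 lt_neqAle eq_sym ne closure_ge.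
have [rpos rle] := bigmin_props Fpos.
exists (\big[Order.min/1]_i F i); split => //.
set r := \big[Order.min/1]_i F i in rpos rle *.
apply/seteqP; split => y /=.
  by move=> [Oy By]; split => // i _; exact: Oy.
move=> [By Hy]; split => // i.
case: (boolP (i \in Aset x0)) => iA; first exact: Hy.
have hb := dotp_bound (a i) (fun k => le_trans (coord_le_enorm (y - x0) k) (ltW By)).
have hb2 : `|dotp (a i) (y - x0)| < (S i + 1) * r.
  apply: le_lt_trans hb _; rewrite -/(S i) mulrDl mul1r.
  have : 0 <= S i * (enorm (y - x0)).
    by apply: mulr_ge0 => //; rewrite /enorm sqrtr_ge0.
  have := ler_wpM2l (S0 i) (ltW By); lra.
have h3 : (S i + 1) * r <= lform (a i) x0 - b i.
  have := rle i; rewrite /F (negbTE iA) => h.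
  rewrite mulrC -ler_pdivlMr //; have := S0 i; lra.
move: hb2; rewrite ltr_norml dotpBr => /andP[h4 h5].
rewrite /lform in h3 *; lra.
Qed.

End Poly.
Section Order.
Variables (R : realType) (d m p : nat) (a : 'I_m -> 'rV[R]_d) (b : 'I_m -> R)
  (e : 'I_p -> 'rV[R]_d).

Fixpoint good (L : seq (R * 'I_p * 'I_m)) : Prop :=
  if L is t :: L' then
    0 < dotp (t.1.1 *: e t.1.2) (a t.2) /\
    (forall i, i \in map snd L' -> 0 <= dotp (t.1.1 *: e t.1.2) (a i)) /\ good L'
  else True.

Lemma map_snd (th : R) (j : 'I_p) (s : seq 'I_m) :
  map snd (map (fun i => (th, j, i)) s) = s.
Proof. by elim: s => //= i s ->. Qed.

Lemma good_cat th j s L1 :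
  (forall i, i \in s -> 0 < dotp (th *: e j) (a i)) ->
  (forall i, i \in map snd L1 -> 0 <= dotp (th *: e j) (a i)) ->
  good L1 -> good (map (fun i => (th, j, i)) s ++ L1).
Proof.
elim: s => [|i s IH] //= Hs HL gL; split; first by apply: Hs; rewrite inE eqxx.
split; last by apply: IH => // k ks; apply: Hs; rewrite inE ks orbT.
move=> k; rewrite map_cat mem_cat map_snd => /orP[ks|kL].
  by apply/ltW/Hs; rewrite inE ks orbT.
exact: HL.
Qed.

Lemma good_nth L t0 : good L -> forall n, (n < size L)%N ->
  0 < dotp ((nth t0 L n).1.1 *: e (nth t0 L n).1.2) (a (nth t0 L n).2) /\
  forall n', (n < n' < size L)%N ->
    0 <= dotp ((nth t0 L n).1.1 *: e (nth t0 L n).1.2) (a (nth t0 L n').2).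
Proof.
elim: L => [|t L IH] //= [h1 [h2 gL]] [|n] /=.
  move=> _; split => // -[|n'] //= lt; apply: h2.
  exact: (map_f snd (mem_nth t0 lt)).
rewrite ltnS => lt; have [IH1 IH2] := IH gL n lt; split => // -[|n'] //= H.
exact: IH2.
Qed.

Hypothesis WI : weakly_incoming a b e.

Lemma exists_order n : forall x, closure (Omega a b) x -> (#|Aset a b x| <= n)%N ->
  exists L : seq (R * 'I_p * 'I_m),
    all (fun t => (t.1.1 == 1) || (t.1.1 == -1)) L /\ uniq (map snd L) /\
    (forall i, (i \in map snd L) = (i \in Aset a b x)) /\ good L.
Proof.
elim: n => [|n IH] x cx hA.
  have A0 : Aset a b x = finset.set0 by apply/eqP; rewrite -cards_eq0 -leqn0.
  by exists [::]; split => //; split => //; split => // i; rewrite A0 finset.in_set0.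
case: (set_0Vmem (Aset a b x)) => [A0 | [i0 i0A]].
  by exists [::]; split => //; split => //; split => // i; rewrite A0 finset.in_set0.
have nO : ~ Omega a b x.
  by move=> Ox; move: i0A; rewrite inE => /eqP h; have := Ox i0; rewrite h ltxx.
have [eps [e0 [th [thE [j Hj]]]]] := WI (conj cx nO).
set u := th *: e j.
pose F i := if i \in Aset a b x then 1
  else (lform (a i) x - b i) / (`|dotp (a i) u| + 1).
have Fpos i : 0 < F i.
  rewrite /F; case: ifP => // /negbT; rewrite inE => ne.
  apply: divr_gt0; last by have := normr_ge0 (dotp (a i) u); lra.
  by rewrite subr_gt0 lt_neqAle eq_sym ne closure_ge.
have [dpos dle] := bigmin_props Fpos.
set del := \big[Order.min/1]_i F i in dpos dle.
pose t := Order.min eps del.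
have ht0 : 0 < t by rewrite lt_min e0 dpos.
have hteps : t <= eps by rewrite ge_min lexx.
have htd : t <= del by rewrite ge_min lexx orbT.
set x1 := x + t *: u.
have ex1 : x + (th * t) *: e j = x1 by rewrite /x1 /u scalerA mulrC.
have lt1 := Hj t ht0 hteps; rewrite ex1 in lt1.
have lf i : lform (a i) x1 = lform (a i) x + t * dotp (a i) u.
  by rewrite /lform dotpDr dotpZr.
have cx1 : closure (Omega a b) x1.
  have [//|ncx1] := pselect (closure (Omega a b) x1).
  have : cfun a b x1 = None.
    rewrite /cfun asboolF; first by rewrite asboolF.
    by move=> Ox1; apply: ncx1; exact: subset_closure.
  by move=> h; rewrite h in lt1.
rewrite (cfun_cl cx1) (cfun_cl cx) /= in lt1.
have sub i : i \in Aset a b x1 -> i \in Aset a b x.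
  apply: contraTT => iA; rewrite inE neq_lt; apply/orP; right.
  have := dle i; rewrite /F (negbTE iA) => h.
  set c := dotp (a i) u in h *.
  have c1 : 0 < `|c| + 1 by have := normr_ge0 c; lra.
  have hs : t * (`|c| + 1) <= lform (a i) x - b i.
    apply: le_trans (ler_wpM2r (ltW c1) htd) _.
    by rewrite -ler_pdivlMr.
  have := ler_norml c `|c|; rewrite lexx => /esym/andP[hc1 _].
  have h2 := ler_wpM2l (ltW ht0) hc1; rewrite mulrN in h2.
  rewrite mulrDr mulr1 in hs; rewrite lf -/c; lra.
have nonneg i : i \in Aset a b x -> 0 <= dotp (a i) u.
  move=> iA; have := closure_ge cx1 i; rewrite lf.
  move: iA; rewrite inE => /eqP -> h.
  by rewrite -(pmulr_rge0 _ ht0); lra.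
have zero_iff i : i \in Aset a b x ->
    (i \in Aset a b x1) = (dotp (a i) u == 0).
  move=> iA; rewrite inE lf; move: iA; rewrite inE => /eqP ->.
  by rewrite addrC -subr_eq0 addrK mulf_eq0 (gt_eqF ht0).
have [L1 [all1 [uniq1 [mem1 good1]]]] := IH x1 cx1 (leq_trans lt1 hA).
pose s := enum (Aset a b x :\: Aset a b x1).
exists (map (fun i => (th, j, i)) s ++ L1).
split.
  rewrite all_cat all1 andbT all_map; apply/allP => ? _ /=.
  by case: thE => ->; rewrite eqxx ?orbT.
split.
  rewrite map_cat map_snd cat_uniq enum_uniq uniq1 andbT /=.
  by apply/hasPn => i; rewrite mem1 => iA1; rewrite mem_enum inE iA1.
split.
  move=> i; rewrite map_cat map_snd mem_cat mem_enum inE mem1.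
  by case: (boolP (i \in Aset a b x1)) => [h|h] /=; [rewrite (sub _ h) | rewrite orbF].
apply: good_cat => //.
  move=> i; rewrite mem_enum inE => /andP[n1 iA].
  by rewrite dotpC lt_def nonneg // andbT -zero_iff.
by move=> i; rewrite mem1 => iA1; rewrite dotpC; apply: nonneg; apply: sub.
Qed.

End Order.
Unset Implicit Arguments.

Theorem lemma1p3 (R : realType) (d m p : nat) (a : 'I_m -> 'rV[R]_d) (b : 'I_m -> R)
  (e : 'I_p -> 'rV[R]_d) :
  (2 <= d)%N ->
  (forall j, a j != 0) ->
  (exists x, Omega a b x) ->
  (exists M : R, forall x, Omega a b x -> enorm x <= M) ->
  weakly_incoming a b e ->
  forall (x0 : 'rV[R]_d) (k : nat),
    closure (Omega a b) x0 -> cfun a b x0 = Some k ->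
  exists r : R, 0 < r /\ exists I : {set 'I_m}, #|I| = k /\
     Omega a b `&` eball x0 r = eball x0 r `&` (\bigcap_(i in [set i | i \in I]) Hplus a b i)
  /\
  exists (beta : 'I_k -> 'I_p) (theta : 'I_k -> R) (ii : 'I_k -> 'I_m),
     (forall n, theta n = 1 \/ theta n = -1) /\
     injective ii /\ (ii @: 'I_k)%SET = I /\
     (forall n : 'I_k, strictly_incoming a (theta n *: e (beta n)) (ii n)) /\
     (forall n m' : 'I_k, (n < m')%N -> incoming a (theta n *: e (beta n)) (ii m')).
Proof.
move=> _ anz _ _ WI x0 k cx hk.
rewrite (cfun_cl cx) in hk; case: hk => hk; subst k.
have [r [r0 req]] := local_eq cx.
exists r; split => //; exists (Aset a b x0); split => //; split => //.
have [L [allL [uL [memL gL]]]] := exists_order WI cx (leqnn _).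
have szL : size L = #|Aset a b x0|.
  rewrite -(size_map snd L) -(card_uniqP uL); apply: eq_card => i; exact: memL.
rewrite -szL.
pose T (n : 'I_(size L)) := tnth (in_tuple L) n.
have TE n x : T n = nth x L n by rewrite /T (tnth_nth x).
have nuE i v : dotp v (nu a i) = (enorm (a i))^-1 * dotp v (a i) by rewrite /nu dotpZr.
exists (fun n => (T n).1.2), (fun n => (T n).1.1), (fun n => (T n).2).
split.
  move=> n; have := allP allL _ (mem_tnth n (in_tuple L)).
  by rewrite -/(T n) => /orP[/eqP|/eqP]; [left|right].
split.
  move=> n1 n2 /= h; apply: val_inj => /=.
  pose dflt := T n1.
  rewrite (TE n1 dflt) (TE n2 dflt) in h.
  apply/eqP; rewrite -(@nth_uniq _ dflt.2 (map snd L) n1 n2) ?size_map ?ltn_ord //.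
  by rewrite !(nth_map dflt) // h.
split.
  apply/setP => i; rewrite -memL; apply/imsetP/idP.
    by move=> [n _ ->]; exact: (map_f snd (mem_tnth n (in_tuple L))).
  move=> /mapP[t tL ->]; have [n nlt nE] := (nthP t) tL.
  by exists (Ordinal nlt) => //; rewrite (TE _ t) nE.
split.
  move=> n; rewrite /strictly_incoming nuE pmulr_rgt0 ?invr_gt0 ?enorm_gt0 //.
  by rewrite (TE n (T n)); have [] := good_nth (T n) gL (ltn_ord n).
move=> n m' lt; rewrite /incoming nuE pmulr_rge0 ?invr_gt0 ?enorm_gt0 //.
rewrite (TE n (T n)) (TE m' (T n)).
have [_ H] := good_nth (T n) gL (ltn_ord n); apply: H.
by rewrite lt ltn_ord.
Qed.
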